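(* Let $B$ be a Boolean algebra, $W\subset B^n$ a Boolean domain, $A,A'\subset W$ finite subsets and $f:A\to A'$ a bijection. Then $f$ is the restriction of a Boolean isomorphism $W\to W$ if and only if $d(f(x),f(y))=d(x,y)$ for all $x,y\in A$, where $d(x,y)=\bigvee_{i=1}^n(x_i\triangle y_i)$.
   Context: A Boolean function $f:B^n\to B$ is a function given by a polynomial expression in the variables, elements of $B$ and the Boolean operations. A Boolean domain is the zero set in $B^n$ of a Boolean function. A Boolean transformation between Boolean domains $U\subset B^n$, $V\subset B^m$ is a map $U\to V$ given coordinatewise by Boolean functions $B^n\to B$; a Boolean isomorphism is a bijective Boolean transformation. $\triangle$ denotes symmetric difference in $B$. *)

(* Defs.v *)
(* A Boolean algebra is a complemented (top/bottom) distributive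
   lattice: mathcomp's ctbDistrLatticeType. *)
From HB Require Import structures.
From mathcomp Require Import all_boot all_order.
Set Implicit Arguments. Unset Strict Implicit. Unset Printing Implicit Defensive.
Import Order.TTheory.
Local Open Scope order_scope.

Definition bvec (d : Order.disp_t) (B : ctbDistrLatticeType d) (n : nat) :=
  {ffun 'I_n -> B}.

Inductive bterm (d : Order.disp_t) (B : ctbDistrLatticeType d) (n : nat) : Type :=
| BVar of 'I_n
| BConst of B
| BJoin of bterm B n & bterm B n
| BMeet of bterm B n & bterm B n
| BCompl of bterm B n.

Fixpoint beval d (B : ctbDistrLatticeType d) n (t : bterm B n) (x : bvec B n) : B :=
  match t with
  | BVar i => x i
  | BConst b => b
  | BJoin t1 t2 => beval t1 x `|` beval t2 x
  | BMeet t1 t2 => beval t1 x `&` beval t2 x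
  | BCompl t1 => ~` beval t1 x
  end.

Definition is_boolean_function d (B : ctbDistrLatticeType d) n (g : bvec B n -> B) :=
  exists t : bterm B n, forall x, g x = beval t x.

(* The Boolean domain given as the zero set of the Boolean function beval p. *)
Definition bdomain d (B : ctbDistrLatticeType d) n (p : bterm B n) : pred (bvec B n) :=
  fun x => beval p x == \bot.

Definition is_boolean_transformation d (B : ctbDistrLatticeType d) n m
  (U : pred (bvec B n)) (V : pred (bvec B m)) (F : bvec B n -> bvec B m) :=
  (exists t : 'I_m -> bterm B n, forall x, U x -> forall j, F x j = beval (t j) x)
  /\ (forall x, U x -> V (F x)).

Definition is_boolean_isomorphism d (B : ctbDistrLatticeType d) n m
  (U : pred (bvec B n)) (V : pred (bvec B m)) (F : bvec B n -> bvec B m) :=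
  is_boolean_transformation U V F
  /\ (forall x y, U x -> U y -> F x = F y -> x = y)
  /\ (forall y, V y -> exists2 x, U x & F x = y).

Definition bsymdiff d (B : ctbDistrLatticeType d) (a b : B) : B :=
  (a `\` b) `|` (b `\` a).

Definition bdist d (B : ctbDistrLatticeType d) n (x y : bvec B n) : B :=
  \join_(i < n) bsymdiff (x i) (y i).

(* Main.v *)
Require Import Defs.
From mathcomp Require Import all_boot all_order.
From HB Require Import structures.

Set Implicit Arguments. Unset Strict Implicit. Unset Printing Implicit Defensive.
Import Order.Theory.
Local Open Scope order_scope.

Section Alg.
Context (d : Order.disp_t) (B : ctbDistrLatticeType d).

Definition loc (r a b : B) := a `&` r = b `&` r.
Definition mix (e a b : B) := (a `&` e) `|` (b `&` ~` e).

Lemma loc_refl (r : B) a : loc r a a. Proof. by []. Qed.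
Lemma loc_sym (r : B) a b : loc r a b -> loc r b a. Proof. by []. Qed.
Lemma loc_trans (r : B) a b c : loc r a b -> loc r b c -> loc r a c.
Proof. by rewrite /loc => ->. Qed.

Lemma loc_split (r : B) e a b : loc (r `&` e) a b -> loc (r `&` ~` e) a b -> loc r a b.
Proof.
rewrite /loc => h1 h2.
by rewrite -[r]meetx1 -(joinxC e) !meetUr h1 h2.
Qed.

Lemma loc_sub (r : B) r' a b : r' <= r -> loc r a b -> loc r' a b.
Proof.
move=> /meet_idPr h; rewrite /loc => e.
by rewrite -h !meetA e.
Qed.

Lemma loc_top a b : loc \top a b -> a = b.
Proof. by rewrite /loc !meetx1. Qed.

Lemma loc_bot a b : loc \bot a b.
Proof. by rewrite /loc !meetx0. Qed.

Lemma loc_join (r : B) a a' b b' : loc r a b -> loc r a' b' -> loc r (a `|` a') (b `|` b').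
Proof. by rewrite /loc !meetUl => -> ->. Qed.

Lemma loc_meet (r : B) a a' b b' : loc r a b -> loc r a' b' -> loc r (a `&` a') (b `&` b').
Proof.
rewrite /loc => h1 h2.
by rewrite -[r in LHS]meetxx meetACA h1 h2 -meetACA meetxx.
Qed.

Lemma loc_complE (r a : B) : ~` a `&` r = ~` (a `&` r) `&` r.
Proof. by rewrite complI meetUl meetCx joinx0. Qed.

Lemma loc_compl (r : B) a b : loc r a b -> loc r (~` a) (~` b).
Proof. by rewrite /loc loc_complE (loc_complE r b) => ->. Qed.

Lemma loc_in (r : B) e : r <= e -> loc r e \top.
Proof. by move=> /meet_idPr h; rewrite /loc meet1x h. Qed.

Lemma loc_out (r : B) e : r <= ~` e -> loc r e \bot.
Proof.
move=> h; have := loc_compl (loc_in h); rewrite complK compl1 => h'.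
by [].
Qed.

Lemma loc_mix_l (r : B) e a b : loc r e \top -> loc r (mix e a b) a.
Proof.
move=> h; rewrite /mix.
apply: (loc_trans (b := (a `&` \top) `|` (b `&` ~` \top))).
  by apply: loc_join; apply: loc_meet => //; apply: loc_compl.
by rewrite meetx1 compl1 meetx0 joinx0.
Qed.

Lemma loc_mix_r (r : B) e a b : loc r e \bot -> loc r (mix e a b) b.
Proof.
move=> h; rewrite /mix.
apply: (loc_trans (b := (a `&` \bot) `|` (b `&` ~` \bot))).
  by apply: loc_join; apply: loc_meet => //; apply: loc_compl.
by rewrite meetx0 compl0 meetx1 join0x.
Qed.

Lemma loc_mix (r : B) e e' a a' b b' : loc r e e' -> loc r a a' -> loc r b b' ->
  loc r (mix e a b) (mix e' a' b').
Proof.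
move=> he ha hb; rewrite /mix.
by apply: loc_join; apply: loc_meet => //; apply: loc_compl.
Qed.

Lemma symdiffE (a b : B) : bsymdiff a b = (a `&` ~` b) `|` (b `&` ~` a).
Proof. by rewrite /bsymdiff !diffE. Qed.

Lemma symdiffC (a b : B) : bsymdiff a b = bsymdiff b a.
Proof. by rewrite /bsymdiff joinC. Qed.

Lemma loc_symdiff (r : B) a a' b b' : loc r a a' -> loc r b b' ->
  loc r (bsymdiff a b) (bsymdiff a' b').
Proof.
move=> ha hb; rewrite !symdiffE.
by apply: loc_join; apply: loc_meet => //; apply: loc_compl.
Qed.

Lemma symdiffxx (a : B) : bsymdiff a a = \bot.
Proof. by rewrite symdiffE meetxC joinxx. Qed.

Lemma loc_symdiff0 (r : B) a b : loc r a b -> loc r (bsymdiff a b) \bot.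
Proof.
move=> h; apply: (loc_trans (b := bsymdiff b b)).
  exact: loc_symdiff.
by rewrite symdiffxx.
Qed.

Lemma loc_symdiff0' r a b : loc r (bsymdiff a b) \bot -> loc r a b.
Proof.
move=> h; apply: (loc_split (e := b)).
  have hb : loc (r `&` b) b \top by apply: loc_in; exact: leIr.
  have h' := loc_sub (leIl r b) h.
  have : loc (r `&` b) (bsymdiff a b) (bsymdiff a \top) by apply: loc_symdiff.
  rewrite [bsymdiff a \top]symdiffE compl1 meetx0 meet1x join0x => h2.
  have h3 := loc_compl (loc_trans (loc_sym h2) h').
  rewrite complK compl0 in h3.
  exact: loc_trans h3 (loc_sym hb).
have hb : loc (r `&` ~` b) b \bot by apply: loc_out; exact: leIr.
have h' := loc_sub (leIl r (~` b)) h.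
have : loc (r `&` ~` b) (bsymdiff a b) (bsymdiff a \bot) by apply: loc_symdiff.
rewrite [bsymdiff a \bot]symdiffE compl0 meetx1 meet0x joinx0 => h2.
exact: loc_trans (loc_trans (loc_sym h2) h') (loc_sym hb).
Qed.

Lemma loc_le0 (r : B) s D : s <= D -> loc r D \bot -> loc r s \bot.
Proof.
rewrite /loc !meet0x => hs hD; apply/eqP; rewrite -lex0 -hD.
exact: leI2.
Qed.

Lemma le_of_meetC0 (a b : B) : a `&` ~` b = \bot -> a <= b.
Proof.
move=> h; apply/meet_idPl.
by rewrite -[a in RHS]meetx1 -(joinxC b) meetUr h joinx0.
Qed.


Lemma eq_split (e a b : B) : loc e a b -> loc (~` e) a b -> a = b.
Proof.
move=> h1 h2; apply: loc_top; apply: (loc_split (e := e)); by rewrite meet1x.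
Qed.

Section Vec.
Context (n : nat).
Local Notation V := (bvec B n).

Definition vloc (r : B) (x y : V) := forall i, loc r (x i) (y i).
Definition vmix (e : B) (x y : V) : V := [ffun i => mix e (x i) (y i)].

Lemma vloc_sub r r' x y : r' <= r -> vloc r x y -> vloc r' x y.
Proof. by move=> h hv i; apply: loc_sub h (hv i). Qed.
Lemma vloc_trans r x y z : vloc r x y -> vloc r y z -> vloc r x z.
Proof. by move=> h1 h2 i; apply: loc_trans (h1 i) (h2 i). Qed.
Lemma vloc_sym r x y : vloc r x y -> vloc r y x.
Proof. by move=> h i; apply: loc_sym. Qed.

Lemma loc_bigjoin r (F G : 'I_n -> B) : (forall i, loc r (F i) (G i)) ->
  loc r (\join_(i < n) F i) (\join_(i < n) G i).
Proof.
move=> h; elim/big_rec2: _ => [|i a b _ hab]; first exact: loc_refl.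
exact: loc_join.
Qed.

Lemma loc_dist r x x' y y' : vloc r x x' -> vloc r y y' ->
  loc r (bdist x y) (bdist x' y').
Proof. by move=> hx hy; apply: loc_bigjoin => i; apply: loc_symdiff. Qed.

Lemma dist_xx (x : V) : bdist x x = \bot.
Proof. by rewrite /bdist big1 // => i _; rewrite symdiffxx. Qed.

Lemma distC (x y : V) : bdist x y = bdist y x.
Proof. by apply: eq_bigr => i _; rewrite symdiffC. Qed.

Lemma vloc_dist0 r x y : vloc r x y -> loc r (bdist x y) \bot.
Proof.
move=> h; apply: (loc_trans (b := bdist y y)); first exact: loc_dist.
by rewrite dist_xx.
Qed.

Lemma dist0_vloc r x y : loc r (bdist x y) \bot -> vloc r x y.
Proof.
move=> h i; apply: loc_symdiff0'; apply: loc_le0 h.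
exact: (@joins_sup _ _ _ i xpredT (fun i => bsymdiff (x i) (y i))).
Qed.

Lemma vloc_of_le r x y : r <= ~` bdist x y -> vloc r x y.
Proof. by move=> h; apply: dist0_vloc; apply: loc_out. Qed.

Lemma le_of_vloc r x y : vloc r x y -> r <= ~` bdist x y.
Proof.
move=> /vloc_dist0; rewrite /loc meet0x => h.
by apply: le_of_meetC0; rewrite complK meetC.
Qed.

Lemma vloc_ec r x y : vloc r x y -> loc r (~` bdist x y) \top.
Proof. by move=> h; apply: loc_in; apply: le_of_vloc. Qed.

Lemma loc_beval r (t : bterm B n) x y : vloc r x y -> loc r (beval t x) (beval t y).
Proof.
move=> h; elim: t => [i|b|t1 IH1 t2 IH2|t1 IH1 t2 IH2|t1 IH1] /=.
- exact: h.
- exact: loc_refl.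
- exact: loc_join.
- exact: loc_meet.
- exact: loc_compl.
Qed.

Lemma vloc_mix_l r e x y : loc r e \top -> vloc r (vmix e x y) x.
Proof. by move=> h i; rewrite ffunE; apply: loc_mix_l. Qed.
Lemma vloc_mix_r r e x y : loc r e \bot -> vloc r (vmix e x y) y.
Proof. by move=> h i; rewrite ffunE; apply: loc_mix_r. Qed.

Lemma vloc_top x y : vloc \top x y -> x = y.
Proof. by move=> h; apply/ffunP => i; apply: loc_top. Qed.

Lemma veq_split e (x y : V) : vloc e x y -> vloc (~` e) x y -> x = y.
Proof. by move=> h1 h2; apply/ffunP => i; apply: eq_split (h1 i) (h2 i). Qed.

Definition bf (g : V -> B) := exists t : bterm B n, forall x, g x = beval t x.

Lemma bf_var i : bf (fun x => x i). Proof. by exists (BVar B i). Qed.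
Lemma bf_const b : bf (fun _ => b). Proof. by exists (BConst n b). Qed.
Lemma bf_join g h : bf g -> bf h -> bf (fun x => g x `|` h x).
Proof. by move=> [t1 h1] [t2 h2]; exists (BJoin t1 t2) => x /=; rewrite h1 h2. Qed.
Lemma bf_meet g h : bf g -> bf h -> bf (fun x => g x `&` h x).
Proof. by move=> [t1 h1] [t2 h2]; exists (BMeet t1 t2) => x /=; rewrite h1 h2. Qed.
Lemma bf_compl g : bf g -> bf (fun x => ~` g x).
Proof. by move=> [t1 h1]; exists (BCompl t1) => x /=; rewrite h1. Qed.
Lemma bf_mix e g h : bf e -> bf g -> bf h -> bf (fun x => mix (e x) (g x) (h x)).
Proof.
move=> he hg hh; rewrite /mix.
by apply: bf_join; apply: bf_meet => //; apply: bf_compl.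
Qed.
Lemma bf_symdiff g h : bf g -> bf h -> bf (fun x => bsymdiff (g x) (h x)).
Proof.
move=> [t1 h1] [t2 h2].
exists (BJoin (BMeet t1 (BCompl t2)) (BMeet t2 (BCompl t1))) => x /=.
by rewrite symdiffE h1 h2.
Qed.


Lemma bf_bigjoin (F : 'I_n -> V -> B) : (forall i, bf (F i)) ->
  bf (fun x => \join_(i < n) F i x).
Proof.
move=> h; have [t ht] := fin_all_exists h.
exists (\big[@BJoin _ _ n/BConst n \bot]_(i < n) t i) => x.
elim/big_rec2: _ => [//|i a u _ ->] /=.
by rewrite ht.
Qed.

Lemma bf_dist (c : V) : bf (fun x => bdist x c).
Proof.
apply: bf_bigjoin => i; apply: bf_symdiff; [exact: bf_var | exact: bf_const].
Qed.

Section Dom.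
Context (p : bterm B n).
Local Notation W := (bdomain p).

Lemma iso_dist G x y : is_boolean_isomorphism W W G -> W x -> W y ->
  bdist (G x) (G y) = bdist x y.
Proof.
move=> [[[t ht] hW] [hinj _]] Wx Wy.
have Gloc r u v : W u -> W v -> vloc r u v -> vloc r (G u) (G v).
  by move=> Wu Wv h j; rewrite (ht u Wu) (ht v Wv); apply: loc_beval.
apply/le_anti/andP; split.
  apply: le_of_meetC0.
  have h := vloc_of_le (le_refl (~` bdist x y)).
  by have := vloc_dist0 (Gloc _ _ _ Wx Wy h); rewrite /loc meet0x.
set r := ~` bdist (G x) (G y).
have hG : vloc r (G x) (G y) := vloc_of_le (le_refl _).
set z := vmix r x y.
have hzx : vloc r z x by apply: vloc_mix_l; apply: loc_in.
have hzy : vloc (~` r) z y by apply: vloc_mix_r; apply: loc_out.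
have Wz : W z.
  have hx : beval p x = \bot := eqP Wx.
  have hy : beval p y = \bot := eqP Wy.
  rewrite /bdomain; apply/eqP; apply: (eq_split (e := r)).
    by rewrite -hx; apply: loc_beval.
  by rewrite -hy; apply: loc_beval.
have hz : G z = G y.
  apply: (veq_split (e := r)).
    exact: vloc_trans (Gloc _ _ _ Wz Wx hzx) hG.
  exact: Gloc _ _ _ Wz Wy hzy.
have ezy := hinj _ _ Wz Wy hz.
have hxy : vloc r x y by rewrite -ezy; apply: vloc_sym.
apply: le_of_meetC0.
by have := vloc_dist0 hxy; rewrite /loc meet0x.
Qed.

Lemma iso_id : is_boolean_isomorphism W W id.
Proof.
split; first split.
- by exists (fun j => BVar B j).
- by [].
split; first by [].
by move=> y Wy; exists y.
Qed.

Fixpoint tsubst (s : 'I_n -> bterm B n) (t : bterm B n) : bterm B n :=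
  match t with
  | BVar i => s i
  | BConst b => BConst n b
  | BJoin t1 t2 => BJoin (tsubst s t1) (tsubst s t2)
  | BMeet t1 t2 => BMeet (tsubst s t1) (tsubst s t2)
  | BCompl t1 => BCompl (tsubst s t1)
  end.

Lemma beval_tsubst s t x :
  beval (tsubst s t) x = beval t [ffun i => beval (s i) x].
Proof. by elim: t => [i|b|t1 IH1 t2 IH2|t1 IH1 t2 IH2|t1 IH1] /=; rewrite ?ffunE ?IH1 ?IH2. Qed.

Lemma iso_comp G K : is_boolean_isomorphism W W G -> is_boolean_isomorphism W W K ->
  is_boolean_isomorphism W W (fun x => K (G x)).
Proof.
move=> [[[tG hG] WG] [iG sG]] [[[tK hK] WK] [iK sK]].
split; first split.
- exists (fun j => tsubst tG (tK j)) => x Wx j.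
  rewrite hK ?WG // beval_tsubst; congr (beval _ _).
  by apply/ffunP => i; rewrite ffunE hG.
- by move=> x Wx; apply: WK; apply: WG.
split.
- by move=> x y Wx Wy e; apply: iG => //; apply: iK => //; apply: WG.
move=> y Wy; have [u Wu <-] := sK y Wy.
have [x Wx <-] := sG u Wu.
by exists x.
Qed.


Lemma vloc_split r e (x y : V) : vloc (r `&` e) x y -> vloc (r `&` ~` e) x y -> vloc r x y.
Proof. by move=> h1 h2 i; apply: loc_split (h1 i) (h2 i). Qed.

Section Swap.
Context (b c : V).

Definition Hsw (x : V) : V :=
  [ffun i => mix (~` bdist x c) (b i) (mix (~` bdist x b) (c i) (x i))].

Lemma Hsw_c : Hsw c = b.
Proof.
apply/ffunP => i; rewrite ffunE dist_xx compl0.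
by apply: loc_top; apply: loc_mix_l.
Qed.

Lemma ec_bot r (x y : V) : r <= bdist x y -> loc r (~` bdist x y) \bot.
Proof. by move=> h; apply: loc_out; rewrite complK. Qed.

Lemma ec_top r (x y : V) : vloc r x y -> loc r (~` bdist x y) \top.
Proof. exact: vloc_ec. Qed.

Lemma Hsw_fix y : bdist c y = bdist b y -> Hsw y = y.
Proof.
move=> hd; set D := bdist c y.
apply: (veq_split (e := D)) => i; rewrite ffunE.
  apply: (loc_trans (loc_mix_r _ _ _)); last apply: loc_mix_r.
    by apply: ec_bot; rewrite distC.
  by apply: ec_bot; rewrite distC -hd.
have hyc : vloc (~` D) c y by apply: vloc_of_le.
have hyb : vloc (~` D) b y by apply: vloc_of_le; rewrite -hd.
apply: (loc_trans (loc_mix_l _ _ _)); last exact: hyb.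
by apply: ec_top; apply: vloc_sym.
Qed.

Lemma Hsw_W x : W b -> W c -> W x -> W (Hsw x).
Proof.
move=> Wb Wc Wx; rewrite /bdomain; apply/eqP.
set E := ~` bdist x c; set F := ~` bdist x b.
apply: (eq_split (e := E)).
  rewrite -(eqP Wb); apply: loc_beval => i; rewrite ffunE.
  by apply: loc_mix_l; apply: loc_in.
apply: (loc_split (e := F)).
  rewrite -(eqP Wc); apply: loc_beval => i; rewrite ffunE.
  apply: (loc_trans (loc_mix_r _ _ _)); first by apply: loc_out; exact: leIl.
  by apply: loc_mix_l; apply: loc_in; exact: leIr.
rewrite -(eqP Wx); apply: loc_beval => i; rewrite ffunE.
apply: (loc_trans (loc_mix_r _ _ _)); first by apply: loc_out; exact: leIl.
by apply: loc_mix_r; apply: loc_out; exact: leIr.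
Qed.

Lemma vloc_refl r (x : V) : vloc r x x.
Proof. by move=> i; apply: loc_refl. Qed.

Lemma Hsw_inv x : Hsw (Hsw x) = x.
Proof.
set E := ~` bdist x c; set F := ~` bdist x b.
have hyE : forall i, Hsw x i = mix E (b i) (mix F (c i) (x i)) by move=> i; rewrite ffunE.
set y := Hsw x.
apply: (veq_split (e := E)).
  have hxc : vloc E x c by apply: vloc_of_le.
  have hyb : vloc E y b by move=> i; rewrite hyE; apply: loc_mix_l; apply: loc_in.
  set D := bdist b c.
  apply: (vloc_split (e := D)).
    have hyb1 := vloc_sub (leIl E D) hyb.
    have ecy : loc (E `&` D) (~` bdist y c) \bot.
      have h := loc_compl (loc_trans (loc_dist hyb1 (vloc_refl _ c)) (loc_in (leIr D E))).
      by rewrite compl1 in h.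
    have eby := ec_top hyb1.
    move=> i; rewrite ffunE.
    apply: (loc_trans (loc_mix_r _ _ ecy)).
    apply: (loc_trans (loc_mix_l _ _ eby)).
    exact: loc_sym (vloc_sub (leIl E D) hxc i).
  have hbc : vloc (E `&` ~` D) b c by apply: dist0_vloc; apply: loc_out; exact: leIr.
  have hyc : vloc (E `&` ~` D) y c := vloc_trans (vloc_sub (leIl _ _) hyb) hbc.
  move=> i; rewrite ffunE.
  apply: (loc_trans (loc_mix_l _ _ (ec_top hyc))).
  exact: loc_trans (hbc i) (loc_sym (vloc_sub (leIl _ _) hxc i)).
apply: (vloc_split (e := F)).
  have hE : loc (~` E `&` F) E \bot by apply: loc_out; exact: leIl.
  have hF : loc (~` E `&` F) F \top by apply: loc_in; exact: leIr.
  have hyc : vloc (~` E `&` F) y c.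
    by move=> i; rewrite hyE; apply: (loc_trans (loc_mix_r _ _ hE)); apply: loc_mix_l.
  have hxb : vloc (~` E `&` F) x b by apply: vloc_of_le; exact: leIr.
  move=> i; rewrite ffunE.
  exact: loc_trans (loc_mix_l _ _ (ec_top hyc)) (loc_sym (hxb i)).
have hE : loc (~` E `&` ~` F) E \bot by apply: loc_out; exact: leIl.
have hF : loc (~` E `&` ~` F) F \bot by apply: loc_out; exact: leIr.
have hyx : vloc (~` E `&` ~` F) y x.
  by move=> i; rewrite hyE; apply: (loc_trans (loc_mix_r _ _ hE)); apply: loc_mix_r.
have ecy : loc (~` E `&` ~` F) (~` bdist y c) \bot.
  exact: loc_trans (loc_compl (loc_dist hyx (vloc_refl _ c))) hE.
have eby : loc (~` E `&` ~` F) (~` bdist y b) \bot.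
  exact: loc_trans (loc_compl (loc_dist hyx (vloc_refl _ b))) hF.
move=> i; rewrite ffunE.
exact: loc_trans (loc_mix_r _ _ ecy) (loc_trans (loc_mix_r _ _ eby) (hyx i)).
Qed.

Lemma Hsw_iso : W b -> W c -> is_boolean_isomorphism W W Hsw.
Proof.
move=> Wb Wc; split; first split.
- have h : forall j : 'I_n, exists t : bterm B n, forall x, Hsw x j = beval t x.
    move=> j; have [t ht] : bf (fun x => mix (~` bdist x c) (b j) (mix (~` bdist x b) (c j) (x j))).
      apply: bf_mix; first by apply: bf_compl; apply: bf_dist.
        exact: bf_const.
      apply: bf_mix; first by apply: bf_compl; apply: bf_dist.
        exact: bf_const.
      exact: bf_var.
    by exists t => x; rewrite ffunE ht.
  have [t ht] := fin_all_exists h.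
  by exists t => x _ j; apply: ht.
- by move=> x Wx; apply: Hsw_W.
split.
- by move=> x y _ _ e; rewrite -(Hsw_inv x) e Hsw_inv.
by move=> y Wy; exists (Hsw y); [apply: Hsw_W | apply: Hsw_inv].
Qed.

End Swap.
End Dom.
End Vec.
End Alg.
Lemma extend d (B : ctbDistrLatticeType d) n (p : bterm B n) (f : bvec B n -> bvec B n) :
  forall L : seq (bvec B n),
  (forall x, x \in L -> bdomain p x) -> (forall x, x \in L -> bdomain p (f x)) ->
  (forall x y, x \in L -> y \in L -> bdist (f x) (f y) = bdist x y) ->
  exists F, is_boolean_isomorphism (bdomain p) (bdomain p) F /\ (forall x, x \in L -> F x = f x).
Proof.
elim=> [|a L IH] hW hfW hd.
  by exists id; split; [apply: iso_id|].
have [G [isoG hG]] : exists G, is_boolean_isomorphism (bdomain p) (bdomain p) G /\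
    (forall x, x \in L -> G x = f x).
  apply: IH.
  - by move=> x hx; apply: hW; rewrite inE hx orbT.
  - by move=> x hx; apply: hfW; rewrite inE hx orbT.
  - by move=> x y hx hy; apply: hd; rewrite inE ?hx ?hy orbT.
have Wa : bdomain p a by apply: hW; rewrite inE eqxx.
have Wb : bdomain p (f a) by apply: hfW; rewrite inE eqxx.
have Wc : bdomain p (G a) by case: isoG => [[_ h] _]; apply: h.
exists (fun x => Hsw (f a) (G a) (G x)); split.
  exact: iso_comp isoG (Hsw_iso Wb Wc).
move=> x; rewrite inE => /orP [/eqP ->|hx]; first exact: Hsw_c.
have Wx : bdomain p x by apply: hW; rewrite inE hx orbT.
rewrite (hG x hx) Hsw_fix // -(hG x hx) (iso_dist isoG Wa Wx) (hG x hx).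
by rewrite hd // inE ?hx ?eqxx ?orbT.
Qed.
Theorem mainTheorem3 (d : Order.disp_t) (B : ctbDistrLatticeType d) (n : nat)
  (p : bterm B n) (A A' : seq (bvec B n)) (f : bvec B n -> bvec B n) :
  (forall x, x \in A -> bdomain p x) ->
  (forall x, x \in A' -> bdomain p x) ->
  (forall x, x \in A -> f x \in A') ->
  (forall x y, x \in A -> y \in A -> f x = f y -> x = y) ->
  (forall y, y \in A' -> exists2 x, x \in A & f x = y) ->
  ((exists F : bvec B n -> bvec B n,
      is_boolean_isomorphism (bdomain p) (bdomain p) F
      /\ (forall x, x \in A -> F x = f x))
   <->
   (forall x y, x \in A -> y \in A -> bdist (f x) (f y) = bdist x y)).
Proof.
Proof.
move=> hA hA' hfA _ _; split.
  move=> [F [isoF hF]] x y hx hy.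
  rewrite -(hF x hx) -(hF y hy).
  exact: iso_dist isoF (hA x hx) (hA y hy).
move=> hd; apply: extend => // x hx.
exact: hA' (hfA x hx).
Qed.
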